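(* Fix an integer $k\ge0$ and for $m\ge0$ let $S_m=(-1)^k\sum_{i=0}^{m}\binom{2k}{m-i}\binom{4k+i}{i}$. Then $S_0=(-1)^k$, $S_1=(-1)^k(6k+1)$, and for all $m\ge0$, \[ (m+2)S_{m+2}=(6k+1)S_{m+1}+(m+1+2k)S_m . \] Moreover, the sequence $T_m=\sum_{i=0}^{2k}(-1)^i\binom{m+k+i}{m+k-i}\binom{m+3k-i}{m-k+i}$ satisfies the same recurrence $(m+2)T_{m+2}=(6k+1)T_{m+1}+(m+1+2k)T_m$ for all $m\ge 0$, with $T_0=(-1)^k$ and $T_1=(-1)^k(6k+1)$.
   Context: Binomial coefficients $\binom{a}{b}$ with integer $a\ge0$ are taken to be $0$ when $b<0$ or $b>a$. *)

(* Defs.v *)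
From HB Require Import structures.
From mathcomp Require Import all_boot all_order all_algebra.
Set Implicit Arguments. Unset Strict Implicit. Unset Printing Implicit Defensive.
Import Order.TTheory GRing.Theory Num.Theory.
Local Open Scope ring_scope.

(* Binomial coefficient C(a, b) with a : nat (a >= 0) and integer lower
   index b, taken to be 0 when b < 0 or b > a (the latter is built into 'C). *)
Definition binz (a : nat) (b : int) : int :=
  if b < 0 then 0 else ('C(a, `|b|%N))%:Z.

Definition Sseq (k m : nat) : int :=
  (-1) ^+ k * \sum_(i < m.+1) ('C(2 * k, m - i) * 'C(4 * k + i, i))%N%:Z.

Definition Tseq (k m : nat) : int :=
  \sum_(i < (2 * k).+1)
     (-1) ^+ i * binz (m + k + i)%N (m%:Z + k%:Z - i%:Z)
               * binz (m + 3 * k - i)%N (m%:Z - k%:Z + i%:Z).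

(* Main.v *)
Require Import Defs.
From HB Require Import structures.
From mathcomp Require Import all_boot all_order all_algebra.
From mathcomp Require Import ring zify.
Import Order.TTheory GRing.Theory Num.Theory.
Local Open Scope ring_scope.

Lemma ffZ (n m : nat) : ((n ^_ m.+1)%N%:Z) = (n ^_ m)%N%:Z * (n%:Z - m%:Z).
Proof.
rewrite ffactnSr PoszM; case: (leqP m n) => h; first by rewrite subzn.
by rewrite (ffact_small h); ring.
Qed.

Definition aT (n r j : nat) : int := ('C(n + r + j, 2*j))%N%:Z.
Definition dT (n j : nat) : int := if j is j'.+1 then ('C(n + j, 2*j'))%N%:Z else 0.

Lemma sideT n i : exists c X p0 p1 p2 pd : int,
  [/\ c != 0, (aT n 0 i * c = X * p0), (aT n 1 i * c = X * p1), (aT n 2 i * c = X * p2)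
     & (dT n i * c = X * pd)] /\
  ((i = 0%N /\ p0 = 1 /\ p1 = 1 /\ p2 = 1 /\ pd = 0) \/
   (exists i' : nat, i = i'.+1 /\
     p0 = ((n + i'.+1)%:Z - 2*i'%:Z) * ((n + i'.+1)%:Z - 2*i'%:Z - 1) /\
     p1 = ((n + i'.+1)%:Z + 1) * ((n + i'.+1)%:Z - 2*i'%:Z) /\
     p2 = ((n + i'.+1)%:Z + 2) * ((n + i'.+1)%:Z + 1) /\
     pd = (2*i'%:Z + 2) * (2*i'%:Z + 1))).
Proof.
case: i => [|i'].
  exists 1, 1, 1, 1, 1, 0; split; last by left.
  by rewrite /aT /dT !muln0 !bin0 !mulr1 ?mul1r.
set N := (n + i'.+1)%N.
exists ((2*i').+2)`!%:Z, (N ^_ (2*i'))%N%:Z.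
eexists; eexists; eexists; eexists; split; last first.
  right; exists i'; split; first by []. split; [reflexivity|split;[reflexivity|split;reflexivity]].
split.
- by rewrite eqz_nat -lt0n fact_gt0.
- rewrite /aT -PoszM (_ : 2 * i'.+1 = (2*i').+2)%N; last by lia.
  rewrite (_ : n + 0 + i'.+1 = N)%N; last by rewrite /N; lia.
  rewrite bin_ffact !ffZ -mulrA; congr (_ * _); rewrite PoszM PoszD; ring.
- rewrite /aT -PoszM (_ : 2 * i'.+1 = (2*i').+2)%N; last by lia.
  rewrite (_ : n + 1 + i'.+1 = N.+1)%N; last by rewrite /N; lia.
  rewrite bin_ffact ffactSS PoszM !ffZ -[N.+1]addn1 PoszD; rewrite /N ?PoszD ?PoszM; ring.
- rewrite /aT -PoszM (_ : 2 * i'.+1 = (2*i').+2)%N; last by lia.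
  rewrite (_ : n + 2 + i'.+1 = N.+2)%N; last by rewrite /N; lia.
  rewrite bin_ffact !ffactSS !PoszM -[N.+2]addn2 -[N.+1]addn1 ; rewrite /N ?PoszD ?PoszM; ring.
- rewrite /dT -/N !factS -!PoszM.
  rewrite (_ : ('C(N, 2 * i') * ((2 * i').+2 * ((2 * i').+1 * (2 * i')`!)))%N
     = ('C(N, 2 * i') * (2 * i')`! * ((2 * i').+2 * (2 * i').+1))%N); last by ring.
  rewrite bin_ffact !PoszM -[(2*i').+2]addn2 -[(2*i').+1]addn1 ; rewrite /N ?PoszD ?PoszM; ring.
Qed.

Lemma combine (m k A0 A1 A2 D B0 B1 B2 E cA cB XA XB p0 p1 p2 pd q0 q1 q2 qd : int) :
 cA != 0 -> cB != 0 -> A0 * cA = XA * p0 -> A1 * cA = XA * p1 -> A2 * cA = XA * p2 ->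
 D * cA = XA * pd ->
 B0 * cB = XB * q0 -> B1 * cB = XB * q1 -> B2 * cB = XB * q2 -> E * cB = XB * qd ->
 (m+2) * (p2 * q2) - (6*k+1) * (p1 * q1) - (m+1+2*k) * (p0 * q0) = k * (p1 * qd + pd * q1) ->
 (m+2) * (A2 * B2) - (6*k+1) * (A1 * B1) - (m+1+2*k) * (A0 * B0) = k * (A1 * E + D * B1).
Proof.
move=> ca cb h0 h1 h2 hd g0 g1 g2 gd hp.
apply: (mulIf ca); apply: (mulIf cb).
have -> : ((m+2) * (A2 * B2) - (6*k+1) * (A1 * B1) - (m+1+2*k) * (A0 * B0)) * cA * cB =
  (m+2) * ((A2 * cA) * (B2 * cB)) - (6*k+1) * ((A1 * cA) * (B1 * cB))
   - (m+1+2*k) * ((A0 * cA) * (B0 * cB)) by ring.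
have -> : k * (A1 * E + D * B1) * cA * cB = k * ((A1 * cA) * (E * cB) + (D * cA) * (B1 * cB)) by ring.
rewrite h0 h1 h2 hd g0 g1 g2 gd.
transitivity (XA * XB * ((m+2) * (p2 * q2) - (6*k+1) * (p1 * q1) - (m+1+2*k) * (p0 * q0))); first by ring.
rewrite hp; ring.
Qed.

Arguments combine [m k A0 A1 A2 D B0 B1 B2 E cA cB XA XB p0 p1 p2 pd q0 q1 q2 qd].

Lemma termT (n m k i j : nat) : n = (m + k)%N -> (i + j = 2 * k)%N ->
  (m%:Z + 2) * (aT n 2 i * aT n 2 j) - (6 * k%:Z + 1) * (aT n 1 i * aT n 1 j)
   - (m%:Z + 1 + 2 * k%:Z) * (aT n 0 i * aT n 0 j)
  = k%:Z * (aT n 1 i * dT n j + dT n i * aT n 1 j).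
Proof.
move=> hn hij.
have [cA [XA [p0 [p1 [p2 [pd [[ca h0 h1 h2 hd] hp]]]]]]] := sideT n i.
have [cB [XB [q0 [q1 [q2 [qd [[cb g0 g1 g2 gd] hq]]]]]]] := sideT n j.
apply: (combine ca cb h0 h1 h2 hd g0 g1 g2 gd).
have hnZ : n%:Z = m%:Z + k%:Z by rewrite hn PoszD.
case: hp => [[ei [-> [-> [-> ->]]]] | [i' [ei [-> [-> [-> ->]]]]]];
case: hq => [[ej [-> [-> [-> ->]]]] | [j' [ej [-> [-> [-> ->]]]]]].
- have -> : k = 0%N by lia.
  ring.
- have hj : j'%:Z = 2 * k%:Z - 1 by lia.
  rewrite (_ : (n + j'.+1)%N%:Z = n%:Z + j'%:Z + 1); last by rewrite addnS -addn1 !PoszD.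
  rewrite hnZ hj; ring.
- have hi : i'%:Z = 2 * k%:Z - 1 by lia.
  rewrite (_ : (n + i'.+1)%N%:Z = n%:Z + i'%:Z + 1); last by rewrite addnS -addn1 !PoszD.
  rewrite hnZ hi; ring.
- have hj : j'%:Z = 2 * k%:Z - 2 - i'%:Z by lia.
  rewrite (_ : (n + i'.+1)%N%:Z = n%:Z + i'%:Z + 1); last by rewrite addnS -addn1 !PoszD.
  rewrite (_ : (n + j'.+1)%N%:Z = n%:Z + j'%:Z + 1); last by rewrite addnS -addn1 !PoszD.
  rewrite hnZ hj; ring.
Qed.

Lemma binz_sub (a c : nat) : binz a (a%:Z - c%:Z) = ('C(a, c))%N%:Z.
Proof.
rewrite /binz; case: (leqP c a) => h.
  by rewrite subzn // ltz_nat ltn0 /= ?absz_nat bin_sub.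
by rewrite subr_lt0 ltz_nat h bin_small.
Qed.

Lemma TseqE k m r : Tseq k (m + r) =
  \sum_(i < (2 * k).+1) (-1) ^+ i * (aT (m + k) r i * aT (m + k) r (2 * k - i)).
Proof.
rewrite /Tseq; apply: eq_bigr => i _.
have hi := ltn_ord i.
rewrite -mulrA; congr (_ * _); congr (_ * _).
  rewrite (_ : (m + r)%N%:Z + k%:Z - i%:Z = (m + r + k + i)%N%:Z - (2 * i)%N%:Z); last by lia.
  rewrite binz_sub /aT; congr (Posz ('C(_, _))); lia.
rewrite (_ : (m + r)%N%:Z - k%:Z + i%:Z = (m + r + 3 * k - i)%N%:Z - (4 * k - 2 * i)%N%:Z); last by lia.
rewrite binz_sub /aT; congr (Posz ('C(_, _))); lia.
Qed.

Lemma tele_ord (N : nat) (F : 'I_N -> int) (g : nat -> int) :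
  (forall i : 'I_N, F i = g i.+1 - g i) -> \sum_(i < N) F i = g N - g 0%N.
Proof.
move=> h; rewrite (eq_bigr (fun i : 'I_N => g (nat_of_ord i).+1 - g i)); last by move=> i _; apply: h.
by rewrite -(big_mkord xpredT (fun i => g i.+1 - g i)) telescope_sumr.
Qed.

Lemma Trec k m : (m + 2)%N%:Z * Tseq k m.+2
         = (6 * k + 1)%N%:Z * Tseq k m.+1 + (m + 1 + 2 * k)%N%:Z * Tseq k m.
Proof.
have e0 := TseqE k m 0; rewrite addn0 in e0.
have e1 := TseqE k m 1; rewrite addn1 in e1.
have e2 := TseqE k m 2; rewrite addn2 in e2.
rewrite e0 e1 e2; set n := (m + k)%N.
apply/eqP; rewrite -subr_eq0 opprD addrA !mulr_sumr -!sumrB.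
pose g i := - (k%:Z) * (-1) ^+ i * (dT n i * dT n ((2 * k).+1 - i)).
rewrite (@tele_ord _ _ g).
  by rewrite /g subn0 subnn /= !mulr0 subr0.
move=> [i hi] /=.
have ht := @termT n m k i (2*k - i)%N (erefl n) ltac:(lia).
rewrite /g.
rewrite (_ : dT n i.+1 = aT n 1 i); last by rewrite /dT /aT; congr (Posz ('C(_, _))); lia.
rewrite (_ : ((2 * k).+1 - i = (2 * k - i).+1)%N); last by lia.
rewrite (_ : ((2 * k).+1 - i.+1 = (2 * k - i))%N); last by lia.
rewrite (_ : dT n (2 * k - i).+1 = aT n 1 (2 * k - i)); last by rewrite /dT /aT; congr (Posz ('C(_, _))); lia.
rewrite !PoszD ?PoszM.
transitivity ((-1) ^+ i * ((m%:Z + 2) * (aT n 2 i * aT n 2 (2 * k - i)) -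
    (6 * k%:Z + 1) * (aT n 1 i * aT n 1 (2 * k - i)) -
    (m%:Z + 1 + 2 * k%:Z) * (aT n 0 i * aT n 0 (2 * k - i)))); first ring.
rewrite ht exprS; ring.
Qed.

Lemma termS k m j : (0 < k)%N -> (j <= 2 * k)%N ->
 (m + 2)%N%:Z * ('C(4 * k + m.+2 - j, 4 * k))%N%:Z
 - (6 * k + 1)%N%:Z * ('C(4 * k + m.+1 - j, 4 * k))%N%:Z
 - (m + 1 + 2 * k)%N%:Z * ('C(4 * k + m - j, 4 * k))%N%:Z
 = - (2 * k - j)%N%:Z * ('C(4 * k + m - j, 4 * k - 1))%N%:Z
   + j%:Z * ('C(4 * k + m.+1 - j, 4 * k - 1))%N%:Z.
Proof.
move=> k0 hj.
set u := (4 * k + m - j)%N.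
rewrite (_ : (4 * k + m.+2 - j = u.+2)%N); last by rewrite /u; lia.
rewrite (_ : (4 * k + m.+1 - j = u.+1)%N); last by rewrite /u; lia.
have [K' eK] : exists K', (4 * k)%N = K'.+2 by exists (4 * k - 2)%N; lia.
rewrite (_ : (4 * k - 1 = K'.+1)%N); last by lia.
rewrite eK.
set X := (u ^_ K')%N%:Z.
have W0 : ('C(u, K'.+2))%N%:Z * (K'.+2)`!%:Z = X * (u%:Z - K'%:Z) * (u%:Z - K'%:Z - 1).
  rewrite -PoszM bin_ffact !ffZ /X -[K'.+1]addn1 PoszD; ring.
have W1 : ('C(u.+1, K'.+2))%N%:Z * (K'.+2)`!%:Z = (u%:Z + 1) * X * (u%:Z - K'%:Z).
  rewrite -PoszM bin_ffact ffactSS PoszM !ffZ /X -[u.+1]addn1 ?PoszD; ring.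
have W2 : ('C(u.+2, K'.+2))%N%:Z * (K'.+2)`!%:Z = (u%:Z + 2) * (u%:Z + 1) * X.
  rewrite -PoszM bin_ffact !ffactSS !PoszM /X -[u.+2]addn2 -[u.+1]addn1 ?PoszD; ring.
have V0 : ('C(u, K'.+1))%N%:Z * (K'.+2)`!%:Z = X * (u%:Z - K'%:Z) * (K'%:Z + 2).
  rewrite factS -PoszM mulnCA bin_ffact PoszM ffZ /X -[K'.+2]addn2 ?PoszD; ring.
have V1 : ('C(u.+1, K'.+1))%N%:Z * (K'.+2)`!%:Z = (u%:Z + 1) * X * (K'%:Z + 2).
  rewrite factS -PoszM mulnCA bin_ffact ffactSS PoszM /X -[K'.+2]addn2 -[u.+1]addn1 ?PoszD; ring.
have fz : (K'.+2)`!%:Z != 0 by rewrite eqz_nat -lt0n fact_gt0.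
apply: (mulIf fz).
set F := (K'.+2)`!%:Z.
set c0 := ('C(u, K'.+2))%N%:Z; set c1 := ('C(u.+1, K'.+2))%N%:Z; set c2 := ('C(u.+2, K'.+2))%N%:Z.
set v0 := ('C(u, K'.+1))%N%:Z; set v1 := ('C(u.+1, K'.+1))%N%:Z.
transitivity ((m + 2)%N%:Z * (c2 * F) - (6 * k + 1)%N%:Z * (c1 * F) - (m + 1 + 2 * k)%N%:Z * (c0 * F)); first ring.
transitivity (- (2 * k - j)%N%:Z * (v0 * F) + j%:Z * (v1 * F)); last ring.
rewrite W0 W1 W2 V0 V1.
have hu : u%:Z = 4 * k%:Z + m%:Z - j%:Z by rewrite /u; lia.
have hK : K'%:Z = 4 * k%:Z - 2 by lia.
have hkj : (2 * k - j)%N%:Z = 2 * k%:Z - j%:Z by lia.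
rewrite hu hK hkj !PoszD ?PoszM; ring.
Qed.

Lemma zero_range (h : nat -> int) a b : (forall i, (a <= i < b)%N -> h i = 0) ->
  \sum_(a <= i < b | xpredT i) h i = 0.
Proof.
move=> hz; rewrite big1_seq // => i /andP [_]; rewrite mem_index_iota; exact: hz.
Qed.

Lemma sum_window3 (h : nat -> int) N a : (a + 3 <= N)%N ->
  (forall i, (i < a)%N \/ (a + 3 <= i)%N -> h i = 0) ->
  \sum_(i < N) h i = h a + h a.+1 + h a.+2.
Proof.
move=> hN hz.
rewrite -(big_mkord xpredT h) (@big_cat_nat _ _ _ a 0 N) //; last lia.
rewrite (@big_cat_nat _ _ _ (a + 3) a N) //; last lia.
rewrite zero_range; last by move=> i hi; apply: hz; left; lia.
rewrite (@zero_range h (a + 3) N); last by move=> i hi; apply: hz; right; lia.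
rewrite big_ltn; last lia.
rewrite big_ltn; last lia.
rewrite big_ltn; last lia.
rewrite big_geq; last lia.
rewrite /=; ring.
Qed.

Lemma sum_window1 (h : nat -> int) N a : (a < N)%N ->
  (forall i, (i < N)%N -> i != a -> h i = 0) ->
  \sum_(i < N) h i = h a.
Proof.
move=> hN hz.
rewrite (bigD1 (Ordinal hN)) //= big1 ?addr0 // => i hi; apply: hz => //.
Qed.

Lemma sum_trunc (h : nat -> int) a b : (forall i, (a <= i)%N -> h i = 0) ->
  (forall i, (b <= i)%N -> h i = 0) -> \sum_(i < a) h i = \sum_(i < b) h i.
Proof.
have key : forall a b, (a <= b)%N -> (forall i, (a <= i)%N -> h i = 0) ->
    \sum_(i < a) h i = \sum_(i < b) h i.
  move=> a' b' ab ha; rewrite (big_ord_widen b' h ab) big_mkcond; apply: eq_bigr => i _.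
  by case: ifP => // /negbT; rewrite -leqNgt => /ha ->.
move=> ha hb; case: (leqP a b) => ab; first exact: key.
by symmetry; apply: key => //; apply: ltnW.
Qed.

Definition sS k m : int := \sum_(j < (2 * k).+1) ('C(2 * k, j) * 'C(4 * k + m - j, 4 * k))%N%:Z.

Lemma SseqE k m : Sseq k m = (-1) ^+ k * sS k m.
Proof.
rewrite /Sseq /sS; congr (_ * _).
rewrite -(big_mkord xpredT (fun i => ('C(2 * k, m - i) * 'C(4 * k + i, i))%N%:Z)) big_rev_mkord subn0.
transitivity (\sum_(i < m.+1) ('C(2 * k, i) * 'C(4 * k + m - i, 4 * k))%N%:Z).
  apply: eq_bigr => i _; have hi := ltn_ord i.
  congr Posz; congr (_ * _); first by congr binomial; lia.
  rewrite (_ : (4 * k + (m.+1 - i.+1) = 4 * k + (m - i))%N); last by lia.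
  rewrite (_ : (m.+1 - i.+1 = (4 * k + (m - i)) - 4 * k)%N); last by lia.
  rewrite bin_sub ?leq_addr //; congr binomial; lia.
apply: (@sum_trunc (fun j => ('C(2 * k, j) * 'C(4 * k + m - j, 4 * k))%N%:Z)) => j hj /=.
  case: (leqP j (2 * k)) => hk.
    by rewrite (@bin_small (4 * k + m - j)) ?muln0 //; lia.
  by rewrite bin_small.
by rewrite bin_small.
Qed.

Lemma sSrec k m : (m + 2)%N%:Z * sS k m.+2
   - (6 * k + 1)%N%:Z * sS k m.+1 - (m + 1 + 2 * k)%N%:Z * sS k m = 0.
Proof.
case: k => [|k'].
  rewrite /sS !big_ord1 /= !bin0 ?muln1 ?mul1n ?bin0. lia.
set k := k'.+1.
rewrite /sS !mulr_sumr -!sumrB.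
pose g j := - (j%:Z) * ('C(2 * k, j) * 'C(4 * k + m.+1 - j, 4 * k - 1))%N%:Z.
rewrite (@tele_ord _ _ g).
  rewrite /g bin_small ?mul0n ?mulr0 ?mul0r ?subr0 //; lia.
move=> [j hj] /=.
have hS := @termS k m j (ltac:(rewrite /k; lia)) (ltac:(lia)).
have hb : (j.+1)%:Z * ('C(2 * k, j.+1))%N%:Z = (2 * k - j)%N%:Z * ('C(2 * k, j))%N%:Z
  by rewrite -!PoszM mul_bin_left.
rewrite /g (_ : (4 * k + m.+1 - j.+1 = 4 * k + m - j)%N); last by lia.
rewrite !PoszM.
set c := ('C(2 * k, j))%N%:Z.
transitivity (c * ((m + 2)%N%:Z * ('C(4 * k + m.+2 - j, 4 * k))%N%:Z
 - (6 * k + 1)%N%:Z * ('C(4 * k + m.+1 - j, 4 * k))%N%:Z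
 - (m + 1 + 2 * k)%N%:Z * ('C(4 * k + m - j, 4 * k))%N%:Z)); first ring.
rewrite hS.
transitivity (- ((j.+1)%:Z * ('C(2 * k, j.+1))%N%:Z) * ('C(4 * k + m - j, 4 * k - 1))%N%:Z
   + j%:Z * c * ('C(4 * k + m.+1 - j, 4 * k - 1))%N%:Z); last ring.
rewrite hb /c; ring.
Qed.

Lemma bin_n2 n : ('C((2 * n).+2, 2 * n))%N = ((n.+1) * (2 * n).+1)%N.
Proof.
rewrite -{2}(_ : ((2 * n).+2 - 2 = 2 * n)%N); last by lia.
rewrite bin_sub // bin2.
have -> : ((2 * n).+2 * ((2 * n).+2).-1 = ((n.+1) * (2 * n).+1).*2)%N.
  rewrite -mul2n /=; ring.
by rewrite doubleK.
Qed.



Lemma T0 k : Tseq k 0 = (-1) ^+ k.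
Proof.
have e : Tseq k 0 = \sum_(i < (2 * k).+1) (-1) ^+ i * (aT k 0 i * aT k 0 (2 * k - i)) := TseqE k 0 0.
rewrite e.
rewrite (@sum_window1 (fun i => (-1) ^+ i * (aT k 0 i * aT k 0 (2 * k - i))) _ k).
- rewrite /aT (_ : (2 * k - k = k)%N); last by lia.
  rewrite (_ : (k + 0 + k = 2 * k)%N); last by lia.
  by rewrite binn mulr1.
- lia.
move=> i hi hik; rewrite /aT; case: (ltngtP i k) => h.
- rewrite (@bin_small (k + 0 + (2 * k - i))); last by lia.
  ring.
- rewrite (@bin_small (k + 0 + i)); last by lia.
  ring.
- by move: hik; rewrite h eqxx.
Qed.

Lemma T1 k : Tseq k 1 = (-1) ^+ k * (6 * k + 1)%N%:Z.
Proof.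
have e : Tseq k 1 = \sum_(i < (2 * k).+1) (-1) ^+ i * (aT k 1 i * aT k 1 (2 * k - i)) := TseqE k 0 1.
rewrite e; case: k {e} => [|k'].
  by rewrite big_ord1 /aT /=; reflexivity.
rewrite (@sum_window3 (fun i => (-1) ^+ i * (aT k'.+1 1 i * aT k'.+1 1 (2 * k'.+1 - i))) _ k'); first last.
- move=> i [hi|hi]; rewrite /aT.
    rewrite (@bin_small (k'.+1 + 1 + (2 * k'.+1 - i))); last by lia.
    ring.
  rewrite (@bin_small (k'.+1 + 1 + i)); last by lia.
  ring.
- lia.
rewrite /aT.
rewrite (_ : (k'.+1 + 1 + k' = (2 * k').+2)%N); last by lia.
rewrite (_ : (k'.+1 + 1 + (2 * k'.+1 - k') = (2 * (k'.+2)))%N); last by lia.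
rewrite (_ : (2 * (2 * k'.+1 - k') = 2 * (k'.+2))%N); last by lia.
rewrite (_ : (k'.+1 + 1 + k'.+1 = (2 * k'.+1).+1)%N); last by lia.
rewrite (_ : (k'.+1 + 1 + (2 * k'.+1 - k'.+1) = (2 * k'.+1).+1)%N); last by lia.
rewrite (_ : (2 * (2 * k'.+1 - k'.+1) = 2 * k'.+1)%N); last by lia.
rewrite (_ : (k'.+1 + 1 + k'.+2 = 2 * k'.+2)%N); last by lia.
rewrite (_ : (k'.+1 + 1 + (2 * k'.+1 - k'.+2) = (2 * k').+2)%N); last by lia.
rewrite (_ : (2 * (2 * k'.+1 - k'.+2) = 2 * k')%N); last by lia.
rewrite !binn bin_n2 binSn !exprS.
set A := (-1) ^+ k'.
transitivity (A * ((k'.+1 * (2 * k').+1)%N%:Z * 1 - ((2 * k'.+1).+1)%:Z * ((2*k'.+1).+1)%:Z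
   + 1 * (k'.+1 * (2*k').+1)%N%:Z)); first ring.
transitivity (A * (-1 * (6 * k'.+1 + 1)%N%:Z)); last ring.
congr (_ * _); nia.
Qed.

Lemma S0 k : Sseq k 0 = (-1) ^+ k.
Proof. rewrite /Sseq big_ord1 /= subnn !bin0 muln1; ring. Qed.
Lemma S1 k : Sseq k 1 = (-1) ^+ k * (6 * k + 1)%N%:Z.
Proof. rewrite /Sseq big_ord_recr big_ord1 /= subn0 subnn !bin1 !bin0 ?addn0 ?muln1 ?mul1n.
congr (_ * _); lia. Qed.
Lemma Srec k m : (m + 2)%N%:Z * Sseq k m.+2
         = (6 * k + 1)%N%:Z * Sseq k m.+1 + (m + 1 + 2 * k)%N%:Z * Sseq k m.
Proof.
rewrite !SseqE; have h := sSrec k m.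
apply/eqP; rewrite -subr_eq0; apply/eqP.
transitivity ((-1) ^+ k * ((m + 2)%N%:Z * sS k m.+2
   - (6 * k + 1)%N%:Z * sS k m.+1 - (m + 1 + 2 * k)%N%:Z * sS k m)); first ring.
by rewrite h mulr0.
Qed.

Theorem mainTheorem13 (k : nat) :
  (Sseq k 0 = (-1) ^+ k /\
      Sseq k 1 = (-1) ^+ k * (6 * k + 1)%N%:Z /\
      (forall m : nat,
         (m + 2)%N%:Z * Sseq k m.+2
         = (6 * k + 1)%N%:Z * Sseq k m.+1 + (m + 1 + 2 * k)%N%:Z * Sseq k m) /\
      (forall m : nat,
         (m + 2)%N%:Z * Tseq k m.+2
         = (6 * k + 1)%N%:Z * Tseq k m.+1 + (m + 1 + 2 * k)%N%:Z * Tseq k m) /\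
      Tseq k 0 = (-1) ^+ k /\
      Tseq k 1 = (-1) ^+ k * (6 * k + 1)%N%:Z).
Proof.
split; first exact: S0.
split; first exact: S1.
split; first exact: Srec.
split; first exact: Trec.
split; first exact: T0.
exact: T1.
Qed.
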